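(* Let $d\ge 2$ and $c_1\in(0,1]$. There exist constants $C>1$, $c\in(0,1)$ and $0<c'\le C'$, depending only on $d$ and $c_1$, such that the following holds for every finite field $\mathbb F_q$ of characteristic greater than two. Let $E,F\subset\mathbb F_q^d$ and $0\le\alpha\le1$. Assume that the number of distinct lines $l_x$ with $x\in E\setminus\{0\}$ is at least $c_1 q^{-\alpha}|E|$. If $|E||F|\ge Cq^{d+\alpha}$, then there exists a set $E_0\subset E$ with $c' q^{-\alpha}|E|\le|E_0|\le C' q^{-\alpha}|E|$ such that $|\Pi(E_0,F)|\ge c\,q$.
   Context: $\mathbb F_q$ is a finite field with $q$ elements and characteristic greater than two; $\mathbb F_q^*=\mathbb F_q\setminus\{0\}$. For $x\in\mathbb F_q^d\setminus\{0\}$, $l_x=\{sx: s\in\mathbb F_q^*\}$ (the line through the origin and $x$, with the origin removed). For $E,F\subset\mathbb F_q^d$, $\Pi(E,F)=\{x\cdot y: x\in E,\ y\in F\}$ with $x\cdot y=\sum_i x_iy_i$. *)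

(* Defs.v *)
From mathcomp Require Import all_boot all_algebra all_field.
From Stdlib Require Import Reals.
Set Implicit Arguments. Unset Strict Implicit. Unset Printing Implicit Defensive.
Import GRing.Theory.
Local Open Scope ring_scope.

Definition dotv (K : finFieldType) (d : nat) (x y : 'rV[K]_d) : K :=
  \sum_(i < d) x 0 i * y 0 i.

Definition line (K : finFieldType) (d : nat) (x : 'rV[K]_d) : {set 'rV[K]_d} :=
  [set s *: x | s in [set s : K | s != 0]].

Definition nlines (K : finFieldType) (d : nat) (E : {set 'rV[K]_d}) : nat :=
  #|[set line x | x in E :\ 0]|.

Definition Pi (K : finFieldType) (d : nat) (E F : {set 'rV[K]_d}) : {set K} :=
  [set dotv x y | x in E, y in F].

Definition char_gt2 (K : finFieldType) : Prop :=
  forall p : nat, p \in [pchar K] -> leq 3 p.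

(* Main.v *)
Require Import Defs.
From mathcomp Require Import all_boot all_order all_algebra all_field.
From mathcomp Require Import zify.
From mathcomp Require ring.
Set Implicit Arguments. Unset Strict Implicit. Unset Printing Implicit Defensive.

Module H1.
Import ring.
Set Implicit Arguments. Unset Strict Implicit. Unset Printing Implicit Defensive.
Import GRing.Theory Num.Theory.
Local Open Scope ring_scope.

Lemma dotvDl (K : finFieldType) d (x y z : 'rV[K]_d) : dotv (x + y) z = dotv x z + dotv y z.
Proof. by rewrite /dotv -big_split /=; apply: eq_bigr => i _; rewrite mxE mulrDl. Qed.
Lemma dotvZl (K : finFieldType) d (s : K) (x z : 'rV[K]_d) : dotv (s *: x) z = s * dotv x z.
Proof. by rewrite /dotv mulr_sumr; apply: eq_bigr => i _; rewrite mxE mulrA. Qed.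
Lemma dotvNl (K : finFieldType) d (x z : 'rV[K]_d) : dotv (- x) z = - dotv x z.
Proof. by rewrite /dotv -sumrN; apply: eq_bigr => i _; rewrite mxE mulNr. Qed.
Lemma dotvC (K : finFieldType) d (x z : 'rV[K]_d) : dotv x z = dotv z x.
Proof. by rewrite /dotv; apply: eq_bigr => i _; rewrite mulrC. Qed.
Lemma dotv_delta (K : finFieldType) d (i : 'I_d) (z : 'rV[K]_d) : dotv (delta_mx 0 i) z = z 0 i.
Proof.
rewrite /dotv (bigD1 i) //= big1 ?addr0 => [|j ji]; rewrite mxE.
  by rewrite !eqxx mul1r.
by rewrite (negbTE ji) andbF mul0r.
Qed.

Lemma card_ker (K : finFieldType) d (z : 'rV[K]_d) : z != 0 ->
  (#|[set w : 'rV[K]_d | dotv w z == 0%R]| * #|K| <= #|K| ^ d)%N.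
Proof.
move=> nz.
have [i zi] : exists i, z 0 i != 0.
  apply/existsP; apply: contraR nz; rewrite negb_exists => /forallP H.
  by apply/eqP/rowP => j; rewrite mxE; apply/eqP; move: (H j); rewrite negbK.
set S := [set w | _].
pose phi (p : 'rV[K]_d * K) := p.1 + (p.2 / z 0 i) *: delta_mx 0 i.
have inj : {in setX S setT &, injective phi}.
  move=> [w t] [w' t']; rewrite !inE /= andbT andbT => wS w'S E.
  have : dotv (phi (w,t)) z = dotv (phi (w',t')) z by rewrite E.
  rewrite /phi /= !dotvDl !dotvZl !dotv_delta.
  move: wS w'S => /eqP -> /eqP ->. rewrite !add0r !divfK // => Ett.
  subst t'. by move: E; rewrite /phi /= => /addIr ->.
have -> : (#|K| ^ d = #|{: 'rV[K]_d}|)%N by rewrite card_mx mul1n.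
by rewrite -[#|K|]cardsT -cardsX -(card_in_imset inj); apply: max_card.
Qed.

Lemma cs_sum (R : realDomainType) (I : finType) (A : {pred I}) (a : I -> R) :
  (\sum_(i in A) a i) ^+ 2 <= #|A|%:R * \sum_(i in A) a i ^+ 2.
Proof.
set S := \sum_(i in A) a i; set Q := \sum_(i in A) a i ^+ 2.
have H : 0 <= \sum_(i in A) \sum_(j in A) (a i - a j) ^+ 2.
  by apply: sumr_ge0 => i _; apply: sumr_ge0 => j _; apply: sqr_ge0.
have E1 : forall i, \sum_(j in A) (a i - a j) ^+ 2 =
     #|A|%:R * a i ^+ 2 - (a i * S) *+ 2 + Q.
  move=> i; under eq_bigr => j _ do rewrite sqrrB.
  rewrite big_split /= sumrB sumr_const sumrMnl -mulr_sumr -mulr_natl.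
  by rewrite mulr1 mulr_natl.
have E : \sum_(i in A) \sum_(j in A) (a i - a j) ^+ 2 =
   (#|A|%:R * Q - S ^+ 2) *+ 2.
  under eq_bigr => i _ do rewrite E1.
  rewrite big_split sumrB /= sumr_const sumrMnl -mulr_sumr -mulr_suml -expr2.
  rewrite mulrnBl -mulr_natl -mulr_natl. 
  rewrite -[Q *+ #|A|]mulr_natl. rewrite -/S -/Q !mulr1 !mulr2n; ring.
rewrite E in H.
rewrite -subr_ge0. by rewrite pmulrn_lge0 in H.
Qed.

End H1.
Import H1.

Module H2.
Set Implicit Arguments. Unset Strict Implicit. Unset Printing Implicit Defensive.
Import GRing.Theory Num.Theory.

Lemma card_setP_sum (T : finType) (F : {set T}) (P : pred T) :
  #|[set y in F | P y]| = \sum_(y in F) (P y : nat).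
Proof.
rewrite -sum1_card big_mkcond [RHS]big_mkcond /=; apply: eq_bigr => i _.
by rewrite inE; case: (i \in F); case: (P i).
Qed.

Lemma card_set_sum (T : finType) (P : pred T) :
  #|[set y | P y]| = \sum_y (P y : nat).
Proof.
rewrite -sum1_card big_mkcond /=; apply: eq_bigr => i _.
by rewrite inE; case: (P i).
Qed.

Definition fcnt (K : finFieldType) d (F : {set 'rV[K]_d}) (w : 'rV[K]_d) (t : K) : nat :=
  #|[set y in F | dotv w y == t]|.

Definition Wp (K : finFieldType) d (F : {set 'rV[K]_d}) (w : 'rV[K]_d) : nat :=
  \sum_(y in F) \sum_(y' in F) (dotv w y == dotv w y' : nat).

Lemma sum_fcnt (K : finFieldType) d (F : {set 'rV[K]_d}) w :
  \sum_t fcnt F w t = #|F|.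
Proof.
rewrite /fcnt; under eq_bigr do rewrite card_setP_sum.
rewrite exchange_big /= -sum1_card; apply: eq_bigr => y _.
rewrite (bigD1 (dotv w y)) //= eqxx big1 // => t /negbTE.
by rewrite eq_sym => ->.
Qed.

Lemma sq_fcnt (K : finFieldType) d (F : {set 'rV[K]_d}) w :
  \sum_t (fcnt F w t) ^ 2 = Wp F w.
Proof.
rewrite /fcnt; under eq_bigr do rewrite card_setP_sum -mulnn big_distrlr /=.
rewrite exchange_big /=; apply: eq_bigr => y _.
rewrite exchange_big /=; apply: eq_bigr => y' _.
rewrite (bigD1 (dotv w y)) //= eqxx big1 ?addn0 => [|t /negbTE tn].
  by rewrite mul1n eq_sym.
by rewrite eq_sym tn.
Qed.

Lemma Wp_scale (K : finFieldType) d (F : {set 'rV[K]_d}) (s : K) x :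
  s != 0%R -> Wp F (s *: x) = Wp F x.
Proof.
move=> nz; apply: eq_bigr => y _; apply: eq_bigr => y' _.
by rewrite !dotvZl (inj_eq (mulfI nz)).
Qed.

Lemma sum_Wp (K : finFieldType) d (F : {set 'rV[K]_d}) :
  #|K| * \sum_w Wp F w <= #|K| ^ d.+1 * #|F| + #|K| ^ d * #|F| ^ 2.
Proof.
rewrite /Wp exchange_big /=.
under eq_bigr => y _ do rewrite exchange_big /=.
rewrite big_distrr /=.
have H : forall y, y \in F -> #|K| * \sum_(y' in F) \sum_w (dotv w y == dotv w y' : nat)
     <= #|K| ^ d.+1 + #|F| * #|K| ^ d.
  move=> y yF; rewrite big_distrr /= (bigD1 y) //=.
  apply: leq_add.
    under eq_bigr do rewrite eqxx.
    by rewrite sum1_card card_mx mul1n expnS.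
  apply: (@leq_trans (\sum_(y' in F | y' != y) #|K| ^ d)).
    apply: leq_sum => y' /andP[_ ne].
    have -> : \sum_w (dotv w y == dotv w y' : nat) =
        #|[set w : 'rV[K]_d | dotv w (y - y') == 0%R]|.
      rewrite card_set_sum; apply: eq_bigr => w _.
      by rewrite dotvC [dotv w y']dotvC [dotv w (y - y')]dotvC dotvDl dotvNl subr_eq0.
    by rewrite mulnC; apply: card_ker; rewrite subr_eq0 eq_sym.
  rewrite big_mkcondr /= -sum_nat_const; apply: leq_sum => y' _.
  by case: (y' != y).
apply: (@leq_trans (\sum_(y in F) (#|K| ^ d.+1 + #|F| * #|K| ^ d))).
  by apply: leq_sum => y yF; apply: H.
rewrite sum_nat_const.
move: (#|K| ^ d) #|F| => b m.
rewrite expnS. nia.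
Qed.

End H2.
Import H2.

Module H3.
Set Implicit Arguments. Unset Strict Implicit. Unset Printing Implicit Defensive.
Import GRing.Theory Num.Theory.

Lemma G_ge (K : finFieldType) d (F : {set 'rV[K]_d}) w :
  #|F| ^ 2 <= #|K| * Wp F w.
Proof.
have := @cs_sum int K predT (fun t : K => (fcnt F w t)%:R%R).
rewrite -natr_sum sum_fcnt.
under eq_bigr do rewrite -natrX.
rewrite -natr_sum sq_fcnt -!natrX -natrM ler_nat. by [].
Qed.

Local Open Scope ring_scope.
Lemma step3 (K : finFieldType) d (A F : {set 'rV[K]_d}) :
  (0%R \notin A) ->
  (forall x x' (s : K), x \in A -> x' \in A -> x' = s *: x -> x = x') ->
  (#|K|.-1 * \sum_(x in A) (#|K| * Wp F x - #|F| ^ 2) <= #|K| ^ d.+1 * #|F|)%N.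
Proof.
move=> A0 Hl.
set G := fun w => (#|K| * Wp F w - #|F| ^ 2)%N.
have GE : forall w, (G w + #|F|^2 = #|K| * Wp F w)%N by move=> w; rewrite subnK // G_ge.
have Gs : forall (s:K) x, s != 0%R -> G (s *: x) = G x by move=> s x nz; rewrite /G Wp_scale.
have tot : (\sum_w G w <= #|K| ^ d.+1 * #|F|)%N.
  have := sum_Wp F. rewrite big_distrr /=.
  under eq_bigr do rewrite -GE.
  rewrite big_split /= sum_nat_const.
  by rewrite card_mx mul1n leq_add2r.
set S := [set p : 'rV[K]_d * K | (p.1 \in A) && (p.2 != 0%R)].
have inj : {in S &, injective (fun p => p.2 *: p.1)}.
  move=> [x s] [x' s']; rewrite !inE /= => /andP[xA sn] /andP[x'A s'n] E.
  have xx : x = x'.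
    apply: (Hl x x' (s'^-1 * s)) => //. by rewrite -scalerA E scalerA mulVf // scale1r.
  subst x'. congr pair. apply/eqP; rewrite -subr_eq0.
  have : (s - s') *: x == 0%R by rewrite scalerBl E subrr.
  rewrite scaler_eq0 => /orP[//|x0]. by move: A0; rewrite -(eqP x0) xA.
have E1 : (\sum_(x in A) #|K|.-1 * G x = \sum_(w in [set p.2 *: p.1 | p in S]) G w)%N.
  rewrite big_imset //=.
  rewrite (eq_bigl (fun p => (p.1 \in A) && (p.2 != 0%R))); last by move=> p; rewrite inE.
  rewrite -(pair_big_dep (fun x => x \in A) (fun _ s => s != 0%R) (fun x s => G (s *: x))) /=.
  apply: eq_bigr => x _.
  under eq_bigr => s sn do rewrite Gs //.
  rewrite sum_nat_const. congr (_ * _).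
  by rewrite -(cardC1 (0%R : K)); apply: eq_card => s; rewrite !inE.
rewrite big_distrr /= E1. apply: leq_trans tot.
rewrite [\sum_w G w](bigID (fun w => w \in [set p.2 *: p.1 | p in S])) /=.
apply: leq_addr.
Qed.

End H3.
Import H3.

Module H4.
Import ring.
Set Implicit Arguments. Unset Strict Implicit. Unset Printing Implicit Defensive.
Import Order.TTheory GRing.Theory Num.Theory.
Local Open Scope ring_scope.

Lemma var_id (K : finFieldType) (a : K -> int) (S : int) :
  \sum_t a t = S ->
  \sum_t (#|K|%:R * a t - S) ^+ 2 = #|K|%:R * (#|K|%:R * \sum_t a t ^+ 2 - S ^+ 2).
Proof.
move=> HS.
have -> : \sum_t (#|K|%:R * a t - S) ^+ 2 =
   \sum_t ((#|K|%:R ^+ 2) * a t ^+ 2) - \sum_t ((#|K|%:R * S *+ 2) * a t) + \sum_(t : K) S ^+ 2.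
  rewrite -sumrB -big_split /=; apply: eq_bigr => t _; ring.
rewrite -mulr_sumr -mulr_sumr HS sumr_const.
rewrite -mulr_natl. ring.
Qed.

Lemma final_arith (q Qd n m X V P : nat) :
  (2 <= q)%N -> (Qd <= n * m)%N -> (q.-1 * X <= q * Qd * m)%N ->
  (q * V <= (n * m) ^ 2 + n * X)%N -> ((n * m) ^ 2 <= P * V)%N -> (1 <= Qd)%N ->
  (q <= 2 * P)%N.
Proof.
move=> q2 HQ H3 H4 H5 Q1.
have b1 : (n * (q.-1 * X) <= n * (q * Qd * m))%N by rewrite leq_mul2l H3 orbT.
have b2 : (n * (q * Qd * m) <= q * (n * m) * (n * m))%N.
  have : (q * (n * m) * Qd <= q * (n * m) * (n * m))%N by rewrite leq_mul2l HQ orbT.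
  move=> h; nia.
set N := (n * m)%N in HQ H4 H5 b1 b2.
have a1 : (q.-1 * (q * V) <= q.-1 * N ^ 2 + q * N ^ 2)%N.
  have : (q.-1 * (q * V) <= q.-1 * (N ^ 2 + n * X))%N by rewrite leq_mul2l H4 orbT.
  move=> h; nia.
have a2 : (q.-1 * q * N ^ 2 <= P * (q.-1 * N ^ 2 + q * N ^ 2))%N.
  have : (q.-1 * q * N ^ 2 <= q.-1 * q * (P * V))%N by rewrite leq_mul2l H5 orbT.
  move=> h.
  have : (P * (q.-1 * (q * V)) <= P * (q.-1 * N ^ 2 + q * N ^ 2))%N by rewrite leq_mul2l a1 orbT.
  move=> h'; nia.
have Npos : (0 < N ^ 2)%N by rewrite expn_gt0 (leq_trans Q1 HQ).
have a3 : (q.-1 * q <= P * (q.-1 + q))%N.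
  rewrite -(leq_pmul2r Npos). nia.
nia.
Qed.

Lemma core (K : finFieldType) d (A F : {set 'rV[K]_d}) :
  (0%R \notin A) ->
  (forall x x' (s : K), x \in A -> x' \in A -> x' = s *: x -> x = x') ->
  (#|K| ^ d <= #|A| * #|F|)%N ->
  (#|K| <= 2 * #|Pi A F|)%N.
Proof.
move=> A0 Hl HN.
pose nu t := (\sum_(x in A) fcnt F x t)%N.
pose V := (\sum_t nu t ^ 2)%N.
pose X := (\sum_(x in A) (#|K| * Wp F x - #|F| ^ 2))%N.
have H3 := step3 F A0 Hl.
have q2 : (2 <= #|K|)%N by apply: card_finNzRing_gt1.
have sumnu : (\sum_t nu t = #|A| * #|F|)%N.
  rewrite /nu exchange_big /=. under eq_bigr do rewrite sum_fcnt.
  by rewrite sum_nat_const.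
have nuPi : forall t, t \notin Pi A F -> nu t = 0%N.
  move=> t tP; rewrite /nu big1 // => x xA.
  rewrite /fcnt card_setP_sum big1 // => y yF.
  apply/eqP; rewrite eqb0; apply: contra tP => /eqP <-; exact: imset2_f.
have H5 : ((#|A| * #|F|) ^ 2 <= #|Pi A F| * V)%N.
  have E : (\sum_(t in Pi A F) nu t = #|A| * #|F|)%N.
    rewrite -sumnu [RHS](bigID (fun t => t \in Pi A F)) /= [Z in _ = (_ + Z)%N]big1 ?addn0 //.
  have := @cs_sum int K (mem (Pi A F)) (fun t => (nu t)%:R).
  rewrite -natr_sum E.
  under eq_bigr do rewrite -natrX.
  rewrite -natr_sum -!natrX -natrM ler_nat => h; apply: leq_trans h _.
  apply: leq_mul => //. rewrite /V [Z in (_ <= Z)%N](bigID (fun t => t \in Pi A F)) /=. exact: leq_addr.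
have H4 : (#|K| * V <= (#|A| * #|F|) ^ 2 + #|A| * X)%N.
  set q := #|K|; set n := #|A|; set m := #|F|.
  have qpos : (0 : int) < q%:R by rewrite ltr0n (leq_trans _ q2).
  have L : \sum_t (q%:R * (nu t)%:R - (n * m)%:R) ^+ 2 =
           q%:R * (q%:R * V%:R - (n * m)%:R ^+ 2) :> int.
    rewrite var_id; first by rewrite /V natr_sum; under [in RHS]eq_bigr do rewrite natrX.
    by rewrite -natr_sum sumnu.
  have Ex : forall t, q%:R * (nu t)%:R - (n * m)%:R =
       \sum_(x in A) (q%:R * (fcnt F x t)%:R - m%:R) :> int.
    move=> t; rewrite sumrB -mulr_sumr /nu natr_sum sumr_const. by rewrite natrM [n%:R * _]mulrC mulr_natr.
  have Wx : forall x, \sum_t (q%:R * (fcnt F x t)%:R - m%:R) ^+ 2 =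
       q%:R * ((q * Wp F x - m ^ 2)%N)%:R :> int.
    move=> x; rewrite var_id; last by rewrite -natr_sum sum_fcnt.
    rewrite natrB ?G_ge // natrM natrX -sq_fcnt natr_sum.
    by under [in RHS]eq_bigr do rewrite natrX.
  have C : q%:R * (q%:R * V%:R - (n * m)%:R ^+ 2) <= n%:R * (q%:R * X%:R) :> int.
    rewrite -L. under eq_bigr do rewrite Ex.
    apply: (@le_trans _ _ (\sum_t n%:R * \sum_(x in A) (q%:R * (fcnt F x t)%:R - m%:R) ^+ 2)).
      by apply: ler_sum => t _; apply: cs_sum.
    rewrite -mulr_sumr exchange_big /=. under eq_bigr do rewrite Wx.
    by rewrite -mulr_sumr /X natr_sum.
  rewrite mulrCA ler_pM2l // in C.
  rewrite -(ler_nat int) natrD !natrM. by rewrite lerBlDl natrM expr2 in C.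
apply: (final_arith q2 HN _ H4 H5).
  by rewrite -expnS.
by rewrite expn_gt0 (leq_trans _ q2).
Qed.

End H4.
Import H4.

Module H5.
Set Implicit Arguments. Unset Strict Implicit. Unset Printing Implicit Defensive.
Import GRing.Theory.
Local Open Scope ring_scope.

Lemma line_scale (K : finFieldType) d (x : 'rV[K]_d) (s : K) :
  s != 0 -> line (s *: x) = line x.
Proof.
move=> sn; apply/setP => u; apply/imsetP/imsetP => [[r rn ->]|[r rn ->]];
  rewrite inE in rn.
  by exists (r * s); [rewrite inE mulf_neq0 | rewrite scalerA].
by exists (r / s); [rewrite inE mulf_neq0 ?invr_eq0 | rewrite scalerA divfK].
Qed.

Lemma select (K : finFieldType) d (E : {set 'rV[K]_d}) (k : nat) :
  (k <= nlines E)%N ->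
  exists E0 : {set 'rV[K]_d}, [/\ E0 \subset E, #|E0| = k, 0 \notin E0 &
     forall x x' (s : K), x \in E0 -> x' \in E0 -> x' = s *: x -> x = x'].
Proof.
move=> hk.
set L := [set line x | x in E :\ 0].
pose T := [set l in take k (enum L)].
have cT : #|T| = k.
  rewrite cardsE; have /card_uniqP -> : uniq (take k (enum L)) by rewrite take_uniq ?enum_uniq.
  by rewrite size_takel // -cardE.
have TL : {subset T <= L}.
  by move=> l; rewrite inE => /mem_take; rewrite mem_enum.
pose repr (l : {set 'rV[K]_d}) := odflt 0 [pick x in E :\ 0 | line x == l].
have reprP : forall l, l \in L -> repr l \in E :\ 0 /\ line (repr l) = l.
  move=> l /imsetP [x0 x0E ->]; rewrite /repr.
  case: pickP => [x /andP[xE /eqP lx] | none] //=.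
  by move: (none x0); rewrite x0E eqxx.
exists [set repr l | l in T]; split.
- apply/subsetP => x /imsetP [l lT ->].
  by have [/setD1P [_ ?] _] := reprP l (TL l lT).
- rewrite card_in_imset // => l l' lT l'T e.
  by rewrite -(reprP l (TL l lT)).2 e (reprP l' (TL l' l'T)).2.
- apply/imsetP => [[l lT e]].
  by have [/setD1P [] ] := reprP l (TL l lT); rewrite -e eqxx.
- move=> x x' s /imsetP [l lT ->] /imsetP [l' l'T ->] e.
  have [/setD1P [n' _] ll'] := reprP l' (TL l' l'T).
  have [_ ll] := reprP l (TL l lT).
  have sn : s != 0.
    by apply: contra n' => /eqP s0; rewrite e s0 scale0r.
  have : l' = l by rewrite -ll' -ll e line_scale.
  by move=> ->.
Qed.

End H5.
Import H5.

Unset Implicit Arguments.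
From Stdlib Require Import Reals Lra Lia ZArith.
Open Scope R_scope.

Lemma powE (m n : nat) : Nat.pow m n = expn m n.
Proof. by elim: n => [|n IH] //=; rewrite IH expnS multE. Qed.

Theorem lemma4p1 (d : nat) (c1 : R) :
  leq 2 d -> 0 < c1 <= 1 ->
  exists C c c' C' : R,
    1 < C /\ 0 < c < 1 /\ 0 < c' <= C' /\
    forall (K : finFieldType), char_gt2 K ->
    forall (E F : {set 'rV[K]_d}) (alpha : R),
      0 <= alpha <= 1 ->
      c1 * Rpower (INR #|K|) (- alpha) * INR #|E| <= INR (nlines E) ->
      C * Rpower (INR #|K|) (INR d + alpha) <= INR #|E| * INR #|F| ->
      exists E0 : {set 'rV[K]_d},
        E0 \subset E /\
        c' * Rpower (INR #|K|) (- alpha) * INR #|E| <= INR #|E0| /\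
        INR #|E0| <= C' * Rpower (INR #|K|) (- alpha) * INR #|E| /\
        c * INR #|K| <= INR #|Pi E0 F|.
Proof.
move=> d2 [c1p c1le].
exists (2 / c1), (1/2), (c1/2), c1.
have c1i : 2 / c1 * c1 = 2 by field; lra.
split; [nra | split; [lra | split; [lra |]]].
move=> K _ E F alpha [a0 a1] Hl Hs.
have q2 : leq 2 #|K| by apply: card_finNzRing_gt1.
have qpos : 0 < INR #|K| by apply: lt_0_INR; apply/leP; apply: leq_trans q2.
set q := INR #|K| in qpos Hl Hs *.
set Q := Rpower q (- alpha) in Hl *.
set Qa := Rpower q alpha.
have Qpos : 0 < Q by rewrite /Q /Rpower; apply: exp_pos.
have Qapos : 0 < Qa by rewrite /Qa /Rpower; apply: exp_pos.
have QQa : Q * Qa = 1.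
  rewrite /Q /Qa -Rpower_plus.
  replace (- alpha + alpha) with 0 by ring. by apply: Rpower_O.
have Hpow : Rpower q (INR d + alpha) = q ^ d * Qa.
  by rewrite Rpower_plus Rpower_pow.
rewrite Hpow in Hs.
have qdpos : 0 < q ^ d by apply: pow_lt.
have HF : INR #|F| <= q ^ d.
  rewrite /q -pow_INR powE; apply: le_INR; apply/leP.
  have -> : expn #|K| d = #|{: 'rV[K]_d}| by rewrite card_mx mul1n.
  by apply: max_card.
have HE0 : 0 <= INR #|E| by apply: pos_INR.
have HF0 : 0 <= INR #|F| by apply: pos_INR.
set a := c1 * Q * INR #|E|.
have Hla : a <= INR (nlines E) by [].
have h2 : 2 / c1 * Qa <= INR #|E|.
  apply: (Rmult_le_reg_r (q ^ d)) => //.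
  have : INR #|E| * INR #|F| <= INR #|E| * q ^ d by apply: Rmult_le_compat_l.
  nra.
have ha : 2 <= a.
  have : c1 * Q * (2 / c1 * Qa) <= a by apply: Rmult_le_compat_l => //; nra.
  have -> : c1 * Q * (2 / c1 * Qa) = 2 * (Q * Qa) by field; lra.
  rewrite QQa; lra.
have [arch1 arch2] := archimed a.
have upg : (1 <= up a - 1)%Z.
  have : (2 < up a)%Z by apply: lt_IZR; lra.
  lia.
set k := Z.to_nat (up a - 1).
have Hk : INR k = IZR (up a) - 1.
  rewrite /k INR_IZR_INZ Z2Nat.id; last lia.
  by rewrite minus_IZR.
have hk1 : INR k <= a by lra.
have hk2 : a / 2 <= INR k by lra.
have kl : leq k (nlines E) by apply/leP; apply: INR_le; lra.
have [E0 [E0E cE0 E00 El]] := select kl.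
have HN : leq (expn #|K| d) (muln #|E0| #|F|).
  apply/leP; apply: INR_le; rewrite -multE mult_INR -powE pow_INR cE0 -/q.
  have : a / 2 * INR #|F| <= INR k * INR #|F| by apply: Rmult_le_compat_r.
  have : a / 2 * INR #|F| = c1 / 2 * Q * (INR #|E| * INR #|F|) by rewrite /a; field.
  have : c1 / 2 * Q * (2 / c1 * (q ^ d * Qa)) <= c1 / 2 * Q * (INR #|E| * INR #|F|).
    apply: Rmult_le_compat_l => //; nra.
  have -> : c1 / 2 * Q * (2 / c1 * (q ^ d * Qa)) = q ^ d * (Q * Qa) by field; lra.
  rewrite QQa; lra.
have HP := core E00 El HN.
have ea : a = c1 * Q * INR #|E| by [].
exists E0; split => //; rewrite cE0; split; [|split].
- rewrite -/Q; nra.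
- rewrite -/Q; nra.
- have : INR #|K| <= INR (muln 2 #|Pi E0 F|) by apply: le_INR; apply/leP.
  rewrite -multE mult_INR /= -/q; lra.
Qed.
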